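(* Let $D\in\mathbb{D}^n_+$, $W\in\mathbb{R}^{n\times n}$, $u\in\mathbb{R}^n$, $A:=W-D$, and $\mathcal X=\{x\in\mathbb{R}^n: Dx\in[0,1]^n\}$. A point $x^\star\in\mathcal X$ is an equilibrium of the projected dynamical system $\dot x=\Pi_{\mathcal X}(x,Ax+u)$ (i.e. $\Pi_{\mathcal X}(x^\star,Ax^\star+u)=0$) if and only if it is an equilibrium of the linear-threshold network $\dot x=-Dx+[Wx+u]_0^1$ (i.e. $-Dx^\star+[Wx^\star+u]_0^1=0$).
   Context: $\mathbb{D}^n_+$ is the set of positive diagonal matrices; $[z]_0^1=\max(0,\min(z,1))$ elementwise. For $x\in\mathcal X$, $T_{\mathcal X}(x)$ is the tangent cone of $\mathcal X$ at $x$ and $\Pi_{\mathcal X}(x,v)=\arg\min_{y\in T_{\mathcal X}(x)}\|y-v\|^2$. *)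

(* Defs.v *)
From HB Require Import structures.
From mathcomp Require Import all_boot all_order all_algebra.
From mathcomp Require Import reals.
Set Implicit Arguments. Unset Strict Implicit. Unset Printing Implicit Defensive.
Import Order.TTheory GRing.Theory Num.Theory.
Local Open Scope ring_scope.

Definition posdiag (R : realType) (n : nat) (D : 'M[R]_n) : Prop :=
  is_diag_mx D /\ forall i : 'I_n, 0 < D i i.

Definition sqnorm (R : realType) (n : nat) (v : 'cV[R]_n) : R :=
  \sum_(i < n) (v i 0) ^+ 2.

Definition Xset (R : realType) (n : nat) (D : 'M[R]_n) (x : 'cV[R]_n) : Prop :=
  forall i : 'I_n, 0 <= (D *m x) i 0 <= 1.

(* Tangent cone of the convex set X at x: the (Euclidean) closure of the cone
   of feasible directions  \bigcup_{t > 0} t (X - x), written out. *)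
Definition tangent_cone (R : realType) (n : nat) (D : 'M[R]_n)
    (x v : 'cV[R]_n) : Prop :=
  forall eps : R, 0 < eps ->
    exists (y : 'cV[R]_n) (t : R),
      Xset D y /\ 0 < t /\ sqnorm (t *: (y - x) - v) < eps.

Definition is_proj (R : realType) (n : nat) (D : 'M[R]_n)
    (x v p : 'cV[R]_n) : Prop :=
  tangent_cone D x p /\
  forall y : 'cV[R]_n, tangent_cone D x y -> sqnorm (p - v) <= sqnorm (y - v).

Definition clamp01 (R : realType) (n : nat) (z : 'cV[R]_n) : 'cV[R]_n :=
  \col_i Num.max 0 (Num.min (z i 0) 1).

(* Main.v *)
Require Import Defs.
From HB Require Import structures.
From mathcomp Require Import all_boot all_order all_algebra.
From mathcomp Require Import reals.
From mathcomp Require Import ring lra.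
Import Order.TTheory GRing.Theory Num.Theory.
Local Open Scope ring_scope.

Lemma clamp_iff (R : realType) (z a : R) : 0 <= a <= 1 ->
  ((0 < z - a -> a = 1) /\ (z - a < 0 -> a = 0)) <-> Num.max 0 (Num.min z 1) = a.
Proof.
move=> /andP[a0 a1].
rewrite minEle maxEle; split.
- move=> [H1 H2]; case: (ltrgtP (z - a) 0) => h.
  + have := H2 h; case: ifP; case: ifP; lra.
  + have := H1 h; case: ifP; case: ifP; lra.
  + case: ifP; case: ifP; lra.
- case: ifP; case: ifP => ? ? <-; split => ?; lra.
Qed.

Lemma lt_def_helper (R : realType) (a : R) : ~~ (a == 1) -> a <= 1 -> a < 1.
Proof. by move=> H1 H2; rewrite lt_neqAle H1 H2. Qed.

Lemma lt_def_helper2 (R : realType) (a : R) : ~~ (a == 0) -> 0 <= a -> 0 < a.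
Proof. by move=> H1 H2; rewrite lt_neqAle eq_sym H1 H2. Qed.

Section Aux.
Variables (R : realType) (n : nat) (D : 'M[R]_n).

Lemma diag_mul (x : 'cV[R]_n) i : is_diag_mx D -> (D *m x) i 0 = D i i * x i 0.
Proof.
move=> /is_diag_mxP Hd; rewrite mxE (bigD1 i) //= big1 ?addr0 // => j Hj.
by rewrite Hd ?mul0r // eq_sym.
Qed.

Lemma sqnorm0 : sqnorm (0 : 'cV[R]_n) = 0.
Proof. by rewrite /sqnorm big1 // => i _; rewrite mxE expr0n. Qed.

Lemma sqnorm_ge_coord (v : 'cV[R]_n) i : (v i 0) ^+ 2 <= sqnorm v.
Proof.
rewrite /sqnorm (bigD1 i) //= lerDl; apply: sumr_ge0 => j _; exact: sqr_ge0.
Qed.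

Lemma tc_dir (x : 'cV[R]_n) i c : posdiag D -> Xset D x ->
  (0 < c /\ (D *m x) i 0 < 1) \/ (c < 0 /\ 0 < (D *m x) i 0) ->
  tangent_cone D x (\col_j (if j == i then c else 0)).
Proof.
move=> [Hd Hp] Hx Hc.
set w := \col_j (if j == i then c else 0).
have Hdi := Hp i.
have [s [s0 Hs]] : exists s : R, 0 < s /\ 0 <= D i i * (x i 0 + s * c) <= 1.
  move: Hc; rewrite diag_mul //; case=> [[c0 a1]|[c0 a0]].
  - exists ((1 - D i i * x i 0) / (D i i * c)); split.
      apply: divr_gt0; [lra| exact: mulr_gt0].
    have -> : D i i * (x i 0 + (1 - D i i * x i 0) / (D i i * c) * c) = 1.
      by field; apply/andP; split; rewrite gt_eqF.
    by rewrite ler01 lexx.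
  - exists ((D i i * x i 0) / (D i i * - c)); split.
      apply: divr_gt0 => //; apply: mulr_gt0 => //; by rewrite oppr_gt0.
    have -> : D i i * (x i 0 + (D i i * x i 0) / (D i i * - c) * c) = 0.
      by field; rewrite (lt_eqF c0) gt_eqF.
    by rewrite lexx ler01.
move=> eps eps0; exists (x + s *: w), s^-1; split; last split.
- move=> j; rewrite diag_mul // !mxE.
  case: eqP => [->|Hj]; first exact: Hs.
  by rewrite mulr0 addr0 -diag_mul //; apply: Hx.
- by rewrite invr_gt0.
- rewrite (addrC x) addrK scalerA mulVf ?gt_eqF // scale1r subrr sqnorm0 //.
Qed.

Lemma tc_sign (x y : 'cV[R]_n) i : posdiag D -> tangent_cone D x y ->
  ((D *m x) i 0 = 0 -> 0 <= y i 0) /\ ((D *m x) i 0 = 1 -> y i 0 <= 0).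
Proof.
move=> [Hd Hp] Hy; have Hdi := Hp i.
split=> Ha; rewrite leNgt; apply/negP => Hyi.
- have e0 : 0 < y i 0 ^+ 2 by rewrite expr2; nra.
  have [y' [t [Hy' [t0 Hn]]]] := Hy _ e0.
  have := le_lt_trans (sqnorm_ge_coord _ i) Hn; rewrite !mxE.
  move: (Hy' i); rewrite !diag_mul // in Ha *; move=> /andP[H1 _].
  have q0 : 0 <= y' i 0 - x i 0 by nra.
  have : 0 <= t * (y' i 0 - x i 0) by nra.
  move=> H; rewrite !expr2; nra.
- have e0 : 0 < y i 0 ^+ 2 by rewrite expr2; nra.
  have [y' [t [Hy' [t0 Hn]]]] := Hy _ e0.
  have := le_lt_trans (sqnorm_ge_coord _ i) Hn; rewrite !mxE.
  move: (Hy' i); rewrite !diag_mul // in Ha *; move=> /andP[_ H1].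
  have q0 : y' i 0 - x i 0 <= 0 by nra.
  have : t * (y' i 0 - x i 0) <= 0 by nra.
  move=> H; rewrite !expr2; nra.
Qed.


Lemma sq_dir (v : 'cV[R]_n) i :
  sqnorm ((\col_j (if j == i then v i 0 else 0)) - v) = sqnorm (0 - v) - (v i 0) ^+ 2.
Proof.
rewrite /sqnorm (bigD1 i) //= [X in _ = X - _](bigD1 i) //= !mxE eqxx subrr expr0n /= add0r.
rewrite sub0r sqrrN addrAC subrr add0r; apply: eq_bigr => j Hj.
by rewrite !mxE (negbTE Hj) !sub0r.
Qed.

Lemma proj0_iff (x v : 'cV[R]_n) : posdiag D -> Xset D x ->
  is_proj D x v 0 <->
  forall i, (0 < v i 0 -> (D *m x) i 0 = 1) /\ (v i 0 < 0 -> (D *m x) i 0 = 0).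
Proof.
move=> Hpd Hx; split.
- move=> [_ Hmin] i; have /andP[a0 a1] := Hx i.
  split=> Hv; apply/eqP; apply: contraT => Hne.
  + have Hw := tc_dir x i (v i 0) Hpd Hx (or_introl (conj Hv (lt_def_helper _ _ Hne a1))).
    have := Hmin _ Hw; rewrite sq_dir; nra.
  + have Hw := tc_dir x i (v i 0) Hpd Hx (or_intror (conj Hv (lt_def_helper2 _ _ Hne a0))).
    have := Hmin _ Hw; rewrite sq_dir; nra.
- move=> H; split.
    move=> eps e0; exists x, 1; split=> //; split; first exact: ltr01.
    by rewrite subrr scaler0 subr0 sqnorm0.
  move=> y Hy; rewrite /sqnorm; apply: ler_sum => i _; rewrite !mxE sub0r sqrrN.
  have [S1 S2] := tc_sign x y i Hpd Hy; have [H1 H2] := H i.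
  case: (ltrgtP (v i 0) 0) => h.
  + have := S1 (H2 h); nra.
  + have := S2 (H1 h); nra.
  + rewrite h; nra.
Qed.

End Aux.

Theorem proposition4 (R : realType) (n : nat) (D W : 'M[R]_n) (u xs : 'cV[R]_n) :
  posdiag D -> Xset D xs ->
  (is_proj D xs ((W - D) *m xs + u) 0
   <-> - (D *m xs) + clamp01 (W *m xs + u) = 0).
Proof.
move=> Hpd Hx; rewrite proj0_iff //.
have vE : forall i, ((W - D) *m xs + u) i 0 = (W *m xs + u) i 0 - (D *m xs) i 0.
  by move=> i; rewrite mulmxBl !mxE addrAC.
have Hx' : forall i, 0 <= (D *m xs) i 0 <= 1 := Hx.
move: (W *m xs + u) (D *m xs) vE Hx' => z a vE {}Hx.
split.
- move=> H; apply/matrixP => i j; rewrite (ord1 j) !mxE.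
  have := H i; rewrite vE => /(clamp_iff _ _ _ (Hx i)) ->.
  by rewrite addNr.
- move=> H i; rewrite vE; apply/(clamp_iff _ _ _ (Hx i)).
  have E : (- a + clamp01 z) i 0 = (0 : 'cV[R]_n) i 0 by rewrite H.
  rewrite !mxE in E.
  by apply/eqP; rewrite -subr_eq0 addrC; apply/eqP.
Qed.
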